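(* Let $s,t$ be real numbers with $s > t > 0$ and let $n\geq 4$ be an integer. Then $|\det U_n| < M_n$, where $M_n$ is the maximum of $|\det A|$ over all $A \in \mathcal{G}_s^{n\times n}([0,t])$; that is, $U_n$ does not attain the maximum absolute determinant in $\mathcal{G}_s^{n\times n}([0,t])$.
   Context: For a real number $s$, a positive integer $n$ and a set $P \subseteq \mathbb{R}$, $\mathcal{G}_s^{n\times n}(P)$ denotes the set of all $n\times n$ real upper Hessenberg matrices $A=(a_{ij})$ with $a_{i+1,i} = s$ for $1\le i\le n-1$, $a_{ij}=0$ for $i > j+1$, and $a_{ij}\in P$ for all $i \le j$. $U_n = U_n(s,t)$ is the matrix in $\mathcal{G}_s^{n\times n}(\{0,t\})$ with $a_{ij} = t$ if $j \ge i$ and $j-i$ is even, and $a_{ij}=0$ if $j>i$ and $j-i$ is odd. *)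

(* Defs.v *)
From HB Require Import structures.
From mathcomp Require Import all_boot all_order all_algebra.
Set Implicit Arguments. Unset Strict Implicit. Unset Printing Implicit Defensive.
Import Order.TTheory GRing.Theory Num.Theory.
Local Open Scope ring_scope.

(* G_s^{n x n}(P): upper Hessenberg n x n matrices with subdiagonal entries s,
   zeros below the subdiagonal, and entries on/above the diagonal in P.
   Indices are 0-based ('I_n); the conditions are index-shift invariant. *)
Definition in_G (R : numDomainType) (s : R) (P : R -> Prop) (n : nat)
    (A : 'M[R]_n) : Prop :=
  forall i j : 'I_n,
    [/\ (i == j.+1 :> nat) -> A i j = s,
        (j.+1 < i)%N -> A i j = 0
      & (i <= j)%N -> P (A i j)].

Definition itv0t (R : numDomainType) (t : R) : R -> Prop :=
  fun x => 0 <= x <= t.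

Definition U_mx (R : numDomainType) (n : nat) (s t : R) : 'M[R]_n :=
  \matrix_(i < n, j < n)
    if (i <= j)%N then (if ~~ odd (j - i) then t else 0)
    else if (i == j.+1 :> nat) then s else 0.

(* Main.v *)
Require Import Defs.
From HB Require Import structures.
From mathcomp Require Import all_boot all_order all_algebra.
From mathcomp Require Import zify ring lra.
Import Order.TTheory GRing.Theory Num.Theory.
Set Implicit Arguments. Unset Strict Implicit. Unset Printing Implicit Defensive.
Local Open Scope ring_scope.

Definition Lf (R : realFieldType) (f : nat -> nat -> R) (k : nat) : R :=
  \det (\matrix_(a < k, b < k) f a b).



Lemma bumpL h i : (i < h)%N -> bump h i = i.
Proof. by rewrite /bump => hi; have -> : (h <= i)%N = false by lia. Qed.

Lemma hessM (R : realFieldType) (s : R) (f : nat -> nat -> R)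
  (hs : forall j, f j.+1 j = s) (h0 : forall i j, (j.+1 < i)%N -> f i j = 0)
  (m : nat) (v : nat -> R) :
  \det (\matrix_(i < m.+1, j < m.+1) (if (j.+1 < m.+1)%N then f i j else v i)) =
  \sum_(i < m.+1) v i * (- s) ^+ (m - i) * Lf f i.
Proof.
elim: m v => [|m IH] v.
  rewrite big_ord1 det_mx11 mxE /= subnn expr0 mulr1 /Lf det_mx00 mulr1 //.
rewrite (expand_det_row _ ord_max) big_ord_recr /= big_ord_recr /=.
rewrite big1 ?add0r; last first.
  move=> [j hj] _; rewrite mxE /=.
  have -> : (j.+1 < m.+2)%N by lia.
  by rewrite h0 ?mul0r //=; lia.
rewrite [in RHS]big_ord_recr /= subnn expr0 mulr1.
rewrite !mxE /= ltnn hs leqnn.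
have E1 : row' ord_max (col' ord_max
   (\matrix_(i < m.+2, j < m.+2) (if (j.+1 < m.+2)%N then f i j else v i)))
   = \matrix_(a < m.+1, b < m.+1) f a b.
  apply/matrixP => a b; rewrite !mxE /=.
  case: a b => [a ha] [b hb] /=; rewrite !bumpL //.
  by have -> : (b.+1 < m.+2)%N by lia.
have E2 : row' ord_max (col' (widen_ord (leqnSn m.+1) ord_max)
   (\matrix_(i < m.+2, j < m.+2) (if (j.+1 < m.+2)%N then f i j else v i)))
   = \matrix_(i < m.+1, j < m.+1) (if (j.+1 < m.+1)%N then f i j else v i).
  apply/matrixP => a b; rewrite !mxE /=.
  case: a b => [a ha] [b hb] /=; rewrite (@bumpL m.+1 a); last lia; rewrite /bump.
  case: (ltnP b m) => hbm.
    have -> : (false + b = b)%N by [].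
    have -> : (b.+1 < m.+2)%N by lia.
    by have -> : (b.+1 < m.+1)%N by lia.
  have -> : (true + b = b.+1)%N by [].
  have -> : (b.+2 < m.+2)%N = false by lia.
  by have -> : (b.+1 < m.+1)%N = false by lia.
rewrite /cofactor E1 E2 IH /Lf.
have -> : ((-1 : R) ^+ (m.+1 + m)) = -1.
  by rewrite -signr_odd; have -> : odd (m.+1 + m) by rewrite addSn /= addnn odd_double.
have -> : ((-1 : R) ^+ (m.+1 + m.+1)) = 1.
  by rewrite -signr_odd addnn odd_double.
rewrite mul1r mulN1r mulrN mulr_sumr; congr (_ + _).
rewrite -sumrN; apply: eq_bigr => i _ /=.
have -> : (m.+1 - i = (m - i).+1)%N by case: i => /= i; lia.
rewrite exprS; ring.
Qed.

Lemma hess (R : realFieldType) (s : R) (f : nat -> nat -> R)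
  (hs : forall j, f j.+1 j = s) (h0 : forall i j, (j.+1 < i)%N -> f i j = 0)
  (k : nat) :
  Lf f k.+1 = \sum_(i < k.+1) f i k * (- s) ^+ (k - i) * Lf f i.
Proof.
rewrite -(hessM hs h0 k (fun i => f i k)) /Lf; congr (\det _).
apply/matrixP => a b; rewrite !mxE.
case: ifP => // hb; have -> // : nat_of_ord b = k.
by case: b hb => /= b; lia.
Qed.

Lemma two_step (R : realFieldType) (s : R) (g : nat -> nat -> R) (L : nat -> R) k :
  (forall i, (i <= k)%N -> g i k.+2 = g i k) ->
  \sum_(i < k.+3) g i k.+2 * (-s) ^+ (k.+2 - i) * L i =
  s ^+ 2 * \sum_(i < k.+1) g i k * (-s) ^+ (k - i) * L i
  + g k.+1 k.+2 * (-s) * L k.+1 + g k.+2 k.+2 * L k.+2.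
Proof.
move=> hg; rewrite big_ord_recr /= big_ord_recr /= subnn expr0 mulr1.
have -> : (k.+2 - k.+1 = 1)%N by lia.
rewrite expr1 mulr_sumr; congr (_ + _ + _).
apply: eq_bigr => [[i hi]] _ /=; rewrite hg; last lia.
have -> : (k.+2 - i = (k - i).+2)%N by lia.
rewrite !exprS; ring.
Qed.

Fixpoint gs (R : realFieldType) (s t : R) (n : nat) : R :=
  match n with
  | 0 => 0
  | 1 => 1
  | (p.+1 as q).+1 => t * gs s t q + s ^+ 2 * gs s t p
  end.

Lemma gsSS (R : realFieldType) (s t : R) n :
  gs s t n.+2 = t * gs s t n.+1 + s ^+ 2 * gs s t n.
Proof. by []. Qed.

Lemma gs_pos (R : realFieldType) (s t : R) (ht : 0 < t) n : 0 < gs s t n.+1.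
Proof.
suff : 0 < gs s t n.+1 /\ 0 < gs s t n.+2 by case.
elim: n => [|n [h1 h2]]; first by rewrite /= mulr1 mulr0 addr0.
split => //; rewrite gsSS.
have := mulr_gt0 ht h2; have := mulr_ge0 (sqr_ge0 s) (ltW h1); lra.
Qed.

Definition fU (R : realFieldType) (s t : R) (i j : nat) : R :=
  if (i <= j)%N then (if ~~ odd (j - i) then t else 0)
  else if (i == j.+1) then s else 0.

Lemma LU_rec (R : realFieldType) (s t : R) k :
  Lf (fU s t) k.+3 = t * Lf (fU s t) k.+2 + s ^+ 2 * Lf (fU s t) k.+1.
Proof.
have hs : forall j, fU s t j.+1 j = s by move=> j; rewrite /fU ltnn eqxx.
have h0 : forall i j, (j.+1 < i)%N -> fU s t i j = 0.
  move=> i j hij; rewrite /fU; have -> : (i <= j)%N = false by lia.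
  by have -> : (i == j.+1) = false by apply/eqP; lia.
rewrite (hess hs h0) two_step; last first.
  move=> i hi; rewrite /fU; have -> : (i <= k.+2)%N by lia.
  have e : (k.+2 - i = (k - i).+2)%N.
    lia.
  by rewrite hi e /= negbK.
rewrite -(hess hs h0) /fU leqnn subnn /=.
have -> : (k.+1 <= k.+2)%N by lia.
have -> : (k.+2 - k.+1 = 1)%N by lia.
rewrite /=; ring.
Qed.

Lemma LU_val (R : realFieldType) (s t : R) k :
  Lf (fU s t) k.+1 = t * gs s t k.+1.
Proof.
have hs : forall j, fU s t j.+1 j = s by move=> j; rewrite /fU ltnn eqxx.
have h0 : forall i j, (j.+1 < i)%N -> fU s t i j = 0.
  move=> i j hij; rewrite /fU; have -> : (i <= j)%N = false by lia.
  by have -> : (i == j.+1) = false by apply/eqP; lia.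
suff : Lf (fU s t) k.+1 = t * gs s t k.+1 /\ Lf (fU s t) k.+2 = t * gs s t k.+2 by case.
elim: k => [|k [h1 h2]].
  have L0 : Lf (fU s t) 0 = 1 by rewrite /Lf det_mx00.
  have L1 : Lf (fU s t) 1 = t.
    by rewrite (hess hs h0) big_ord1 /= L0 /fU /= !mulr1.
  split; first by rewrite L1 /= mulr1.
  rewrite (hess hs h0) big_ord_recr /= big_ord1 /= L0 L1 /fU /=; ring.
split => //; rewrite LU_rec h1 h2 !gsSS; ring.
Qed.

Definition mid (i j : nat) : bool :=
  if (i <= 1)%N then odd (j - i) else ~~ odd (j - i).
Definition patA (m i j : nat) : bool :=
  if j == 0%N then true
  else if (j <= m.+1)%N then mid i j else (~~ mid i j) || (i == m.+3).
Definition fA (R : realFieldType) (s t : R) (m i j : nat) : R :=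
  if (i <= j)%N then (if patA m i j then t else 0)
  else if i == j.+1 then s else 0.
Definition compf (R : realFieldType) (t : R) (i j : nat) : R :=
  if mid i j then 0 else t.
Definition xs (R : realFieldType) (s t : R) (k : nat) : R :=
  s * t * (gs s t k.-1 + t * gs s t k.-2).

Lemma xs_rec (R : realFieldType) (s t : R) k :
  xs s t k.+4 = t * xs s t k.+3 + s ^+ 2 * xs s t k.+2.
Proof. rewrite /xs /=; ring. Qed.

Lemma mid_SS i j : (i <= j)%N -> mid i j.+2 = mid i j.
Proof.
move=> hij; rewrite /mid.
have -> : (j.+2 - i = (j - i).+2)%N by lia.
by rewrite /= negbK.
Qed.

Lemma hsA (R : realFieldType) (s t : R) m j : fA s t m j.+1 j = s.
Proof. by rewrite /fA ltnn eqxx. Qed.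

Lemma h0A (R : realFieldType) (s t : R) m i j :
  (j.+1 < i)%N -> fA s t m i j = 0.
Proof.
move=> hij; rewrite /fA; have -> : (i <= j)%N = false by lia.
by have -> : (i == j.+1) = false by apply/eqP; lia.
Qed.

Lemma LA_small (R : realFieldType) (s t : R) m :
  [/\ Lf (fA s t m) 0 = 1, Lf (fA s t m) 1 = t & Lf (fA s t m) 2 = - (t * s)].
Proof.
have L0 : Lf (fA s t m) 0 = 1 by rewrite /Lf det_mx00.
have L1 : Lf (fA s t m) 1 = t.
  by rewrite (hess (hsA s t m) (h0A s t m)) big_ord1 /= L0 /fA /patA /= !mulr1.
split => //.
rewrite (hess (hsA s t m) (h0A s t m)) big_ord_recr /= big_ord1 /= L0 L1.
rewrite /fA /patA /mid /=; ring.
Qed.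

Lemma LA3 (R : realFieldType) (s t : R) m : (1 <= m)%N ->
  Lf (fA s t m) 3 = - (xs s t 3).
Proof.
move=> hm; have [L0 L1 L2] := LA_small s t m.
rewrite (hess (hsA s t m) (h0A s t m)) !big_ord_recr /= big_ord0 add0r L0 L1 L2.
rewrite /fA /patA /mid /xs /=.
have -> : (2 <= m.+1)%N by lia.
rewrite /=; ring.
Qed.

Lemma LA_step (R : realFieldType) (s t : R) m j : (j.+2 <= m)%N ->
  Lf (fA s t m) j.+4 = s ^+ 2 * Lf (fA s t m) j.+2 + t * Lf (fA s t m) j.+3.
Proof.
move=> hj.
rewrite (hess (hsA s t m) (h0A s t m)) two_step; last first.
  move=> i hi; rewrite /fA.
  have -> : (i <= j.+3)%N by lia.
  rewrite hi /patA /=.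
  have -> : (j.+3 <= m.+1)%N by lia.
  have -> : (j.+1 <= m.+1)%N by lia.
  by rewrite mid_SS.
have e1 : fA s t m j.+2 j.+3 = 0.
  rewrite /fA /patA /mid /=.
  have -> : (j.+2 <= j.+3)%N by lia.
  have -> : (j.+3 <= m.+1)%N by lia.
  by have -> : (j.+3 - j.+2 = 1)%N by lia.
have e2 : fA s t m j.+3 j.+3 = t.
  by rewrite /fA /patA /mid /= leqnn subnn; have -> : (j.+3 <= m.+1)%N by lia.
rewrite -(hess (hsA s t m) (h0A s t m)) e1 e2; ring.
Qed.

Lemma LA_mid (R : realFieldType) (s t : R) m j : (j <= m)%N ->
  Lf (fA s t m) j.+2 = - xs s t j.+2.
Proof.
suff : ((j <= m)%N -> Lf (fA s t m) j.+2 = - xs s t j.+2) /\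
       ((j.+1 <= m)%N -> Lf (fA s t m) j.+3 = - xs s t j.+3) by case.
elim: j => [|j [h1 h2]].
  split; last exact: LA3.
  by have [_ _ ->] := LA_small s t m; rewrite /xs /=; move=> _; ring.
split => // hj; rewrite LA_step // h1 ?h2; try lia.
rewrite xs_rec; ring.
Qed.

Definition Csum (R : realFieldType) (s t : R) m (c : nat) : R :=
  \sum_(i < c.+1) compf t i c * (- s) ^+ (c - i) * Lf (fA s t m) i.

Lemma C_step (R : realFieldType) (s t : R) m c : (1 <= c)%N ->
  Csum s t m c.+2 = s ^+ 2 * Csum s t m c - t * s * Lf (fA s t m) c.+1.
Proof.
move=> hc; rewrite /Csum two_step; last first.
  by move=> i hi; rewrite /compf mid_SS.
rewrite /compf /mid.
have -> : (c.+1 <= 1)%N = false by lia.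
have -> : (c.+2 <= 1)%N = false by lia.
have -> : (c.+2 - c.+1 = 1)%N by lia.
rewrite subnn /=; ring.
Qed.

Lemma C_val (R : realFieldType) (s t : R) m c : (c <= m.+1)%N ->
  Csum s t m c.+2 = s * xs s t c.+2.
Proof.
have [L0 L1 L2] := LA_small s t m.
have C1 : Csum s t m 1 = t ^+ 2.
  rewrite /Csum big_ord_recr /= big_ord1 /= L0 L1 /compf /mid /=; ring.
have C2 : Csum s t m 2 = t * s ^+ 2.
  rewrite /Csum !big_ord_recr /= big_ord0 L0 L1 L2 /compf /mid /=; ring.
suff : ((c <= m.+1)%N -> Csum s t m c.+2 = s * xs s t c.+2) /\
       ((c.+1 <= m.+1)%N -> Csum s t m c.+3 = s * xs s t c.+3) by case.
elim: c => [|c [h1 h2]].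
  split => _; first by rewrite C2 /xs /=; ring.
  by rewrite C_step // C1 L2 /xs /=; ring.
split => // hc; rewrite C_step // h1; last lia.
rewrite LA_mid; last lia.
rewrite xs_rec; ring.
Qed.

Lemma LA_last (R : realFieldType) (s t : R) m :
  Lf (fA s t m) m.+4 = s * xs s t m.+3 + t * (s * xs s t m.+2).
Proof.
have hP : forall i, (i <= m.+2)%N -> patA m i m.+2 = ~~ mid i m.+2.
  move=> i hi; rewrite /patA /=.
  have -> : (m.+2 <= m.+1)%N = false by lia.
  by case: eqP => [E|_]; [lia | rewrite orbF].
have hQ : forall i, (i <= m.+2)%N -> patA m i m.+3 = ~~ mid i m.+3.
  move=> i hi; rewrite /patA /=.
  have -> : (m.+3 <= m.+1)%N = false by lia.
  by case: eqP => [E|_]; [lia | rewrite orbF].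
have L3 : Lf (fA s t m) m.+3 = Csum s t m m.+2.
  rewrite (hess (hsA s t m) (h0A s t m)) /Csum; apply: eq_bigr => [[i hi]] _ /=.
  rewrite /fA /compf; have -> : (i <= m.+2)%N by lia.
  by rewrite hP; [case: (mid i m.+2) | lia].
rewrite (hess (hsA s t m) (h0A s t m)) big_ord_recr /=.
have -> : fA s t m m.+3 m.+3 = t.
  rewrite /fA leqnn /patA /=; have -> : (m.+2 < m.+1)%N = false by lia.
  by rewrite eqxx orbT.
rewrite subnn expr0 mulr1 L3 (C_val s t (leqnSn m)).
rewrite -(C_val s t (leqnn m.+1)) /Csum [in RHS]big_ord_recr /=.
have -> : compf t m.+3 m.+3 = 0 by rewrite /compf /mid /= subnn.
rewrite !mul0r addr0; congr (_ + _).
apply: eq_bigr => [[i hi]] _ /=.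
rewrite /fA /compf; have -> : (i <= m.+3)%N by lia.
by rewrite hQ; [case: (mid i m.+3) | lia].
Qed.

Unset Implicit Arguments.

Theorem proposition4p1 (R : realFieldType) (s t : R) (n : nat)
    (hts : t < s) (ht : 0 < t) (hn : (4 <= n)%N) :
  exists A : 'M[R]_n, in_G s (itv0t t) A /\ `|\det (U_mx n s t)| < `|\det A|.
Proof.
have [m ->] : exists m, n = m.+4 by exists (n - 4)%N; lia.
exists (\matrix_(i < m.+4, j < m.+4) fA s t m i j); split.
  move=> i j; rewrite !mxE; split.
  - move/eqP => e; rewrite /fA; have -> : (i <= j)%N = false by lia.
    by rewrite e eqxx.
  - by move=> h; apply: h0A.
  - move=> h; rewrite /fA h /itv0t; case: patA.
      by rewrite ltW // lexx.
    by rewrite lexx ltW.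
have eU : U_mx m.+4 s t = \matrix_(i < m.+4, j < m.+4) fU s t i j.
  by apply/matrixP => i j; rewrite !mxE.
rewrite eU.
have -> : \det (\matrix_(i < m.+4, j < m.+4) fU s t i j) = Lf (fU s t) m.+4 by [].
have -> : \det (\matrix_(i < m.+4, j < m.+4) fA s t m i j) = Lf (fA s t m) m.+4 by [].
rewrite LU_val LA_last.
have gp := gs_pos s ht m.
have gp4 := gs_pos s ht m.+3.
have key : s * xs s t m.+3 + t * (s * xs s t m.+2) - t * gs s t m.+4
   = t ^+ 2 * ((s - t) * (s + t)) * gs s t m.+1.
  rewrite /xs /=; ring.
have hst : 0 < (s - t) * (s + t) by apply: mulr_gt0; lra.
have pos : 0 < t ^+ 2 * ((s - t) * (s + t)) * gs s t m.+1.
  by apply: mulr_gt0 => //; apply: mulr_gt0 => //; apply: exprn_gt0.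
have lu : 0 < t * gs s t m.+4 by apply: mulr_gt0.
rewrite !gtr0_norm //; lra.
Qed.
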